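(* Let $\mathbb{F}$ be a field, let $n \geq 3$, and let $a,b,c \in \{-1,1\}$ (elements of $\mathbb{F}$). Let $A=(A_{i,j})$ be the $n\times n$ matrix over $\mathbb{F}$ whose entries are: $A_{1,2} = -c$ and $A_{2,1} = c$; $A_{n-1,n} = b$ and $A_{n,n-1} = a$; $A_{i,i+2} = -1$ and $A_{i+2,i} = 1$ for all $1 \leq i \leq n-2$; and all other entries equal to $0$. (For example, for $n=3$ and $n=4$ this gives $A=\begin{pmatrix} 0 & -c & -1 \\ c & 0 & b \\ 1 & a & 0\end{pmatrix}$ and $A=\begin{pmatrix} 0 & -c & -1 & 0 \\ c & 0 & 0 & -1 \\ 1 & 0 & 0 & b \\ 0 & 1 & a & 0\end{pmatrix}$, respectively.) If the rank of $A$ is even, then $a = -b$ (i.e., $A$ is skew-symmetric).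
   Context: An $n\times n$ matrix $A$ over a field is skew-symmetric if $A^T = -A$ and every diagonal entry of $A$ is zero. *)

(* Defs.v *)
From HB Require Import structures.
From mathcomp Require Import all_boot all_order all_algebra.
Set Implicit Arguments. Unset Strict Implicit. Unset Printing Implicit Defensive.
Import GRing.Theory.
Local Open Scope ring_scope.

(* The n x n matrix A(a,b,c) of the paper, with 0-based indices:
   paper index k (1 <= k <= n) corresponds to ordinal k-1.
   A_{1,2} = -c, A_{2,1} = c, A_{n-1,n} = b, A_{n,n-1} = a,
   A_{i,i+2} = -1, A_{i+2,i} = 1, all other entries 0. *)
Definition Amx (F : fieldType) (n : nat) (a b c : F) : 'M[F]_n :=
  \matrix_(i < n, j < n)
    if (i == 0%N :> nat) && (j == 1%N :> nat) then - c
    else if (i == 1%N :> nat) && (j == 0%N :> nat) then c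
    else if (i == n.-2 :> nat) && (j == n.-1 :> nat) then b
    else if (i == n.-1 :> nat) && (j == n.-2 :> nat) then a
    else if (j == i.+2 :> nat) then -1
    else if (i == j.+2 :> nat) then 1
    else 0.

(* Main.v *)
Require Import Defs.
From mathcomp Require Import all_boot all_order all_algebra zify ring.
Set Implicit Arguments. Unset Strict Implicit. Unset Printing Implicit Defensive.
Import GRing.Theory.
Local Open Scope ring_scope.



Definition ind (F : fieldType) (i k : nat) (v : F) : F := if i == k then v else 0.

Lemma Aent (F : fieldType) n (a b c : F) (i j : 'I_n) : (3 <= n)%N ->
  Amx n a b c i j =
  ind i (j-2) (if (2 <= j)%N then -1 else 0) + ind i (j+2) 1
  + ind i 1 (if j == 0%N :> nat then c else 0) + ind i 0 (if j == 1%N :> nat then -c else 0)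
  + ind i n.-1 (if j == n.-2 :> nat then a else 0)
  + ind i n.-2 (if j == n.-1 :> nat then b else 0).
Proof.
move=> n3; rewrite mxE /ind.
have := ltn_ord i; have := ltn_ord j.
move: (nat_of_ord i) (nat_of_ord j) => i' j' hj hi.
repeat (case: ifP => ?; try (exfalso; lia)); rewrite ?addr0 ?add0r //.
Qed.



Definition gof (F : fieldType) n (x : 'rV[F]_n) (k : nat) : F :=
  oapp (fun i : 'I_n => x 0 i) 0 (insub k).

Lemma gofE (F : fieldType) n (x : 'rV[F]_n) (i : 'I_n) : gof x i = x 0 i.
Proof. by rewrite /gof valK. Qed.

Lemma sum_ind (F : fieldType) n (x : 'rV[F]_n) k v :
  \sum_(i < n) x 0 i * ind i k v = if (k < n)%N then gof x k * v else 0.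
Proof.
case: ifP => hk.
  rewrite (bigD1 (Ordinal hk)) //= big1 ?addr0; first by rewrite /ind eqxx -gofE.
  move=> i hi; rewrite /ind; case: eqP => [e|]; last by rewrite mulr0.
  by move: hi; rewrite (_ : i = Ordinal hk) ?eqxx //; apply: val_inj.
apply: big1 => i _; rewrite /ind; case: eqP => [e|]; last by rewrite mulr0.
by move: (ltn_ord i); rewrite e hk.
Qed.

Definition Scol (F : fieldType) n (a b c : F) (g : nat -> F) (j : nat) : F :=
  (if (2 <= j)%N then - g (j-2)%N else 0) + (if (j+2 < n)%N then g (j+2)%N else 0)
  + (if j == 0%N then c * g 1%N else 0) + (if j == 1%N then - c * g 0%N else 0)
  + (if j == n.-2 then a * g n.-1 else 0) + (if j == n.-1 then b * g n.-2 else 0).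

Lemma colAE (F : fieldType) n (a b c : F) (x : 'rV[F]_n) (j : 'I_n) : (3 <= n)%N ->
  (x *m Amx n a b c) 0 j = Scol n a b c (gof x) j.
Proof.
move=> n3; have hj := ltn_ord j; rewrite mxE.
under eq_bigr do rewrite (Aent _ _ _ _ _ n3) !mulrDr.
rewrite !big_split /= !sum_ind /Scol.
have -> : (j - 2 < n)%N by lia.
have -> : (1 < n)%N by lia.
have -> : (0 < n)%N by lia.
have -> : (n.-1 < n)%N by lia.
have -> : (n.-2 < n)%N by lia.
by repeat case: ifP => _; ring.
Qed.



Definition pat (F : fieldType) (c p q : F) (k : nat) : F :=
  if (k %% 4 == 0)%N then p else if (k %% 4 == 1)%N then q
  else if (k %% 4 == 2)%N then - c * q else c * p.

Lemma pat_mod (F : fieldType) (c p q : F) k r : (k %% 4 = r %% 4)%N -> pat c p q k = pat c p q r.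
Proof. by rewrite /pat => ->. Qed.

Lemma Scol_ext (F : fieldType) n (a b c : F) g h j : (3 <= n)%N -> (j < n)%N ->
  (forall k, (k < n)%N -> g k = h k) -> Scol n a b c g j = Scol n a b c h j.
Proof.
move=> n3 hj e; rewrite /Scol.
rewrite (e 1%N ltac:(lia)) (e 0%N ltac:(lia)) (e n.-1 ltac:(lia)) (e n.-2 ltac:(lia)).
case: ifP => h1; [rewrite (e (j-2)%N ltac:(lia))|]; case: ifP => h2; try rewrite (e (j+2)%N h2) //. all: by [].
Qed.

Lemma use0 (F : fieldType) (x y z : F) : z = 0 -> x - y = z -> x = y.
Proof. by move=> -> /eqP; rewrite subr_eq0 => /eqP. Qed.

Lemma per (F : fieldType) n (a b c : F) g : (3 <= n)%N ->
  (forall j, (j < n)%N -> Scol n a b c g j = 0) ->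
  forall k, (k < n)%N -> g k = pat c (g 0%N) (g 1%N) k.
Proof.
move=> n3 hS k; elim/ltn_ind: k => k IH hk.
case: k IH hk => [|[|[|[|k]]]] IH hk; try by rewrite /pat.
- have := hS 0%N ltac:(lia); rewrite /Scol /=.
  have -> : (2 < n)%N by lia. rewrite (_ : (0 == n.-2) = false); last by lia.
  rewrite (_ : (0 == n.-1) = false); last by lia.
  by move=> H; rewrite /pat /=; apply: (use0 H); rewrite ?add0n ?add1n; ring.
- have := hS 1%N ltac:(lia); rewrite /Scol /=.
  have -> : (3 < n)%N by lia. rewrite (_ : (1 == n.-2) = false); last by lia.
  rewrite (_ : (1 == n.-1) = false); last by lia.
  by move=> H; rewrite /pat /=; apply: (use0 H); rewrite ?add0n ?add1n; ring.
- have := hS k.+2 ltac:(lia); rewrite /Scol /=.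
  rewrite (_ : (k.+2 + 2 < n)%N = true); last by lia.
  rewrite (_ : (k.+2 == n.-2) = false); last by lia.
  rewrite (_ : (k.+2 == n.-1) = false); last by lia.
  rewrite (_ : (k.+2 + 2 = k.+4)%N); last by lia.
  move=> H; rewrite (use0 H (_ : g k.+4 - g (k.+2 - 2)%N = _)); last by ring.
  rewrite IH; [|lia|lia]. by apply: pat_mod; lia.
Qed.

Lemma endeq (F : fieldType) n (a b c : F) g : (4 <= n)%N ->
  Scol n a b c g n.-2 = - g (n - 4)%N + a * g n.-1 /\
  Scol n a b c g n.-1 = - g (n - 3)%N + b * g n.-2.
Proof.
move=> n4; rewrite /Scol; split.
  rewrite (_ : (2 <= n.-2)%N = true); last by lia.
  rewrite (_ : (n.-2 + 2 < n)%N = false); last by lia.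
  rewrite (_ : (n.-2 == 0)%N = false); last by lia.
  rewrite (_ : (n.-2 == 1)%N = false); last by lia.
  rewrite (_ : (n.-2 == n.-1)%N = false); last by lia.
  rewrite eqxx (_ : (n.-2 - 2 = n - 4)%N); last by lia.
  by rewrite !addr0.
rewrite (_ : (2 <= n.-1)%N = true); last by lia.
rewrite (_ : (n.-1 + 2 < n)%N = false); last by lia.
rewrite (_ : (n.-1 == 0)%N = false); last by lia.
rewrite (_ : (n.-1 == 1)%N = false); last by lia.
rewrite (_ : (n.-1 == n.-2)%N = false); last by lia.
rewrite eqxx (_ : (n.-1 - 2 = n - 3)%N); last by lia.
by rewrite !addr0.
Qed.

Lemma pat_col (F : fieldType) n (a b c p q : F) j : (4 <= n)%N -> (j < n)%N ->
  j != n.-2 -> j != n.-1 -> Scol n a b c (pat c p q) j = 0.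
Proof.
move=> n4 hj h1 h2; rewrite /Scol (negbTE h1) (negbTE h2) !addr0.
rewrite (_ : (j + 2 < n)%N = true); last by lia.
case: j hj h1 h2 => [|[|j]] hj h1 h2 /=.
- by rewrite /pat /=; ring.
- by rewrite /pat /=; ring.
- rewrite (pat_mod _ _ _ (_ : (j.+2 - 2) %% 4 = (j.+2 + 2) %% 4)%N); last by lia.
  by rewrite !addr0 addNr.
Qed.



Lemma kerchar (F : fieldType) n (a b c : F) (x : 'rV[F]_n) : (3 <= n)%N ->
  x *m Amx n a b c = 0 -> forall k, (k < n)%N -> gof x k = pat c (gof x 0%N) (gof x 1%N) k.
Proof.
move=> n3 hx; apply: (@per _ n a b c) => // j hj.
by rewrite -(colAE _ _ _ x (Ordinal hj) n3) hx mxE.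
Qed.

Lemma kerends (F : fieldType) n (a b c : F) (x : 'rV[F]_n) : (4 <= n)%N ->
  x *m Amx n a b c = 0 ->
  - pat c (gof x 0%N) (gof x 1%N) (n-4)%N + a * pat c (gof x 0%N) (gof x 1%N) n.-1 = 0 /\
  - pat c (gof x 0%N) (gof x 1%N) (n-3)%N + b * pat c (gof x 0%N) (gof x 1%N) n.-2 = 0.
Proof.
move=> n4 hx.
have hS : forall j, (j < n)%N -> Scol n a b c (gof x) j = 0.
  by move=> j hj; rewrite -(colAE _ _ _ x (Ordinal hj)) ?hx ?mxE //; lia.
have kc := kerchar (ltnW n4) hx.
have [e1 e2] := endeq a b c (gof x) n4.
rewrite -(kc (n-4)%N ltac:(lia)) -(kc n.-1 ltac:(lia)) -(kc (n-3)%N ltac:(lia)) -(kc n.-2 ltac:(lia)).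
by rewrite -e1 -e2 !hS //; lia.
Qed.

Lemma rowvec_of (F : fieldType) n (x : 'rV[F]_n) f :
  (forall k, (k < n)%N -> gof x k = f k) -> x = \row_(i < n) f (i : nat).
Proof. by move=> H; apply/rowP => i; rewrite mxE -gofE (H _ (ltn_ord i)). Qed.

Lemma gof_row (F : fieldType) n (f : nat -> F) k : (k < n)%N ->
  gof (\row_(i < n) f (i : nat)) k = f k.
Proof. by move=> hk; have := gofE (\row_(i < n) f (i : nat)) (Ordinal hk); rewrite mxE. Qed.

Lemma vker (F : fieldType) n (a b c p q : F) : (4 <= n)%N ->
  - pat c p q (n-4)%N + a * pat c p q n.-1 = 0 ->
  - pat c p q (n-3)%N + b * pat c p q n.-2 = 0 ->
  (\row_(i < n) pat c p q i) *m Amx n a b c = 0.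
Proof.
move=> n4 e1 e2; apply/rowP => j; rewrite [RHS]mxE colAE; last by lia.
have hj := ltn_ord j.
rewrite (@Scol_ext _ _ _ _ _ _ (pat c p q)) //; first last.
  - by move=> k hk; rewrite gof_row.
  - by lia.
have [f1 f2] := endeq a b c (pat c p q) n4.
case: (eqVneq (j : nat) n.-2) => [->|h1]; first by rewrite f1.
case: (eqVneq (j : nat) n.-1) => [->|h2]; first by rewrite f2.
by rewrite pat_col.
Qed.

Lemma rank_full (F : fieldType) n (A : 'M[F]_n) :
  (forall x : 'rV_n, x *m A = 0 -> x = 0) -> \rank A = n.
Proof.
move=> H.
have K0 : kermx A = 0.
  apply/row_matrixP => i; rewrite row0; apply: H.
  by have := row_sub i (kermx A); rewrite sub_kermx => /eqP.
have := mxrank_ker A; rewrite K0 mxrank0 => /esym/eqP.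
have := rank_leq_row A. by rewrite subn_eq0 => h1 h2; apply/eqP; rewrite eqn_leq h1 h2.
Qed.

Lemma rank_co1 (F : fieldType) n (A : 'M[F]_n) (v : 'rV_n) :
  v != 0 -> v *m A = 0 -> (forall x : 'rV_n, x *m A = 0 -> exists t, x = t *: v) ->
  \rank A = n.-1.
Proof.
move=> v0 vA H.
have r1 : \rank (kermx A) = 1%N.
  apply/eqP; rewrite eqn_leq; apply/andP; split.
    have : (kermx A <= v)%MS.
      apply/row_subP => i; apply/sub_rVP; apply: H.
      by have := row_sub i (kermx A); rewrite sub_kermx => /eqP.
    by move/mxrankS => h; apply: leq_trans h (rank_leq_row v).
  have : (v <= kermx A)%MS by rewrite sub_kermx vA.
  by move/mxrankS; rewrite rank_rV v0.
have := mxrank_ker A; rewrite r1 => h.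
have := rank_leq_row A. lia.
Qed.



Lemma cancel2 (F : fieldType) (a c p : F) : (2:F) != 0 -> a * a = 1 -> c * c = 1 ->
  2 * a * c * p = 0 -> p = 0.
Proof.
move=> h2 ha hc /eqP; rewrite !mulf_eq0 (negbTE h2) /=.
case/orP => [/orP [] /eqP e|/eqP //].
  by move: ha; rewrite e mul0r => /eqP; rewrite eq_sym oner_eq0.
by move: hc; rewrite e mul0r => /eqP; rewrite eq_sym oner_eq0.
Qed.

Lemma cancel2' (F : fieldType) (p : F) : (2:F) != 0 -> 2 * p = 0 -> p = 0.
Proof. by move=> h /eqP; rewrite mulf_eq0 (negbTE h) => /eqP. Qed.

Lemma pat00 (F : fieldType) (c : F) k : pat c 0 0 k = 0.
Proof. by rewrite /pat; repeat case: ifP => _; rewrite ?mulr0. Qed.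

Lemma patZ (F : fieldType) (c t p q : F) k : pat c (t * p) (t * q) k = t * pat c p q k.
Proof. by rewrite /pat; repeat case: ifP => _; ring. Qed.

Lemma odd_of (n : nat) : (n %% 2 = 1)%N -> odd n.
Proof. by rewrite modn2; case: odd. Qed.

Lemma oddrank (F : fieldType) n (a c : F) : (2:F) != 0 -> (3 <= n)%N -> a * a = 1 -> c * c = 1 ->
  (c = a \/ c = - a) -> odd (\rank (Amx n a a c)).
Proof.
move=> h2 n3 ha hc hca.
have [n3e|n4] : (n = 3)%N \/ (4 <= n)%N by lia.
  subst n; rewrite rank_full //.
  move=> x hx.
  have hS : forall j, (j < 3)%N -> Scol 3 a a c (gof x) j = 0.
    by move=> j hj; rewrite -(colAE _ _ _ x (Ordinal hj)) ?hx ?mxE.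
  have S0 := hS 0%N isT; have S1 := hS 1%N isT; have S2 := hS 2%N isT.
  rewrite /Scol /= in S0 S1 S2.
  rewrite ?addr0 ?add0r /= add0n subnn in S0 S1 S2.
  have e : 2*a*c*gof x 1 = c * (- gof x 0 + a * gof x 1) + a * (gof x 2 + c * gof x 1)
     - (- c * gof x 0 + a * gof x 2) by ring.
  rewrite S0 S1 S2 mulr0 mulr0 subr0 addr0 in e.
  have g1 := cancel2 h2 ha hc e.
  rewrite g1 mulr0 addr0 in S0. rewrite g1 mulr0 addr0 in S2.
  have g0 : gof x 0 = 0 by rewrite -[LHS]opprK S2 oppr0.
  apply/rowP => i; rewrite mxE -gofE.
  by case: i => [[|[|[|]]] hi] //=.
have kc := fun x (hx : x *m Amx n a a c = 0) => kerchar (ltnW n4) hx.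
have ke := fun x (hx : x *m Amx n a a c = 0) => kerends n4 hx.
have [r|[r|[r|r]]] : (n %% 4 = 0 \/ n %% 4 = 1 \/ n %% 4 = 2 \/ n %% 4 = 3)%N by lia.
{ have m1 : ((n-4) %% 4 = 0 %% 4)%N by lia.
  have m2 : ((n.-1) %% 4 = 3 %% 4)%N by lia.
  have m3 : ((n-3) %% 4 = 1 %% 4)%N by lia.
  have m4 : ((n.-2) %% 4 = 2 %% 4)%N by lia.
  have nodd : odd n.-1 by apply: odd_of; lia.
  case: hca => ce; subst c.
  { rewrite (@rank_co1 _ _ _ (\row_(i < n) pat a 1 0 i)) //.
    { have n0 : (0 < n)%N by lia.
      apply/negP => /eqP/rowP/(_ (Ordinal n0)); rewrite !mxE /pat /=.
      by move=> /eqP; rewrite ?oner_eq0 ?eqxx. }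
    { apply: vker => //.
      all: rewrite ?(pat_mod _ _ _ m1) ?(pat_mod _ _ _ m2) ?(pat_mod _ _ _ m3) ?(pat_mod _ _ _ m4) /pat /= .
      all: rewrite ?mulr0 ?mulr1 ?ha ?mulrN ?mulNr ?opprK ?oppr0 ?addr0 ?add0r ?subrr ?addNr ?addrN ?ha; try done; ring. }
    { move=> x hx; exists (gof x 0).
      have hq : gof x 1 = 0.
        have [L1 L2] := ke x hx.
  rewrite ?(pat_mod _ _ _ m1) ?(pat_mod _ _ _ m2) ?(pat_mod _ _ _ m3) ?(pat_mod _ _ _ m4) /pat /= in L1 L2.
        apply: (@cancel2' _ (gof x 1) h2).
        have e : 2 * gof x 1 = - (- gof x 1 + a * (- a * gof x 1)) + (1 - a * a) * gof x 1 by ring.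
        by rewrite e ?L1 ?L2 ha ?subrr ?mulr0 ?mul0r ?addr0 ?oppr0.
      apply/rowP => i; rewrite !mxE -gofE (kc x hx _ (ltn_ord i)) hq /pat.
      by repeat case: ifP => _; ring. } }
  { rewrite (@rank_co1 _ _ _ (\row_(i < n) pat (-a) 0 1 i)) //.
    { have n0 : (1 < n)%N by lia.
      apply/negP => /eqP/rowP/(_ (Ordinal n0)); rewrite !mxE /pat /=.
      by move=> /eqP; rewrite ?oner_eq0 ?eqxx. }
    { apply: vker => //.
      all: rewrite ?(pat_mod _ _ _ m1) ?(pat_mod _ _ _ m2) ?(pat_mod _ _ _ m3) ?(pat_mod _ _ _ m4) /pat /= .
      all: rewrite ?mulr0 ?mulr1 ?ha ?mulrN ?mulNr ?opprK ?oppr0 ?addr0 ?add0r ?subrr ?addNr ?addrN ?ha; try done; ring. }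
    { move=> x hx; exists (gof x 1).
      have hp : gof x 0 = 0.
        have [L1 L2] := ke x hx.
  rewrite ?(pat_mod _ _ _ m1) ?(pat_mod _ _ _ m2) ?(pat_mod _ _ _ m3) ?(pat_mod _ _ _ m4) /pat /= in L1 L2.
        apply: (@cancel2' _ (gof x 0) h2).
        have e : 2 * gof x 0 = - (- gof x 0 + a * (- a * gof x 0)) + (1 - a * a) * gof x 0 by ring.
        by rewrite e ?L1 ?L2 ha ?subrr ?mulr0 ?mul0r ?addr0 ?oppr0.
      apply/rowP => i; rewrite !mxE -gofE (kc x hx _ (ltn_ord i)) hp /pat.
      by repeat case: ifP => _; ring. } } }
{ have m1 : ((n-4) %% 4 = 1 %% 4)%N by lia.
  have m2 : ((n.-1) %% 4 = 0 %% 4)%N by lia.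
  have m3 : ((n-3) %% 4 = 2 %% 4)%N by lia.
  have m4 : ((n.-2) %% 4 = 3 %% 4)%N by lia.
  rewrite rank_full; first by apply: odd_of; lia.
  move=> x hx. have [L1 L2] := ke x hx.
  rewrite ?(pat_mod _ _ _ m1) ?(pat_mod _ _ _ m2) ?(pat_mod _ _ _ m3) ?(pat_mod _ _ _ m4) /pat /= in L1 L2.
  have e : 2 * a * c * gof x 0 = c * (- gof x 1 + a * gof x 0) + (- (- c * gof x 1) + a * (c * gof x 0)) by ring.
  rewrite L1 L2 ?mulr0 ?addr0 ?subr0 in e.
  have h1 := cancel2 h2 ha hc e.
  have h3 : gof x 1 = 0.
    have e' : gof x 1 = a * gof x 0 - (- gof x 1 + a * gof x 0) by ring.
    by rewrite e' ?L1 ?L2 h1 ?mulr0 ?subr0 ?addr0 ?oppr0.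
  by apply/rowP => i; rewrite [RHS]mxE -gofE (kc x hx _ (ltn_ord i)) h1 h3 pat00. }
{ have m1 : ((n-4) %% 4 = 2 %% 4)%N by lia.
  have m2 : ((n.-1) %% 4 = 1 %% 4)%N by lia.
  have m3 : ((n-3) %% 4 = 3 %% 4)%N by lia.
  have m4 : ((n.-2) %% 4 = 0 %% 4)%N by lia.
  have nodd : odd n.-1 by apply: odd_of; lia.
  case: hca => ce; subst c.
  { rewrite (@rank_co1 _ _ _ (\row_(i < n) pat a 1 0 i)) //.
    { have n0 : (0 < n)%N by lia.
      apply/negP => /eqP/rowP/(_ (Ordinal n0)); rewrite !mxE /pat /=.
      by move=> /eqP; rewrite ?oner_eq0 ?eqxx. }
    { apply: vker => //.
      all: rewrite ?(pat_mod _ _ _ m1) ?(pat_mod _ _ _ m2) ?(pat_mod _ _ _ m3) ?(pat_mod _ _ _ m4) /pat /= .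
      all: rewrite ?mulr0 ?mulr1 ?ha ?mulrN ?mulNr ?opprK ?oppr0 ?addr0 ?add0r ?subrr ?addNr ?addrN ?ha; try done; ring. }
    { move=> x hx; exists (gof x 0).
      have hq : gof x 1 = 0.
        have [L1 L2] := ke x hx.
  rewrite ?(pat_mod _ _ _ m1) ?(pat_mod _ _ _ m2) ?(pat_mod _ _ _ m3) ?(pat_mod _ _ _ m4) /pat /= in L1 L2.
        apply: (@cancel2' _ (gof x 1) h2).
        have e : 2 * gof x 1 = a * (- (- a * gof x 1) + a * gof x 1) + 2 * (1 - a * a) * gof x 1 by ring.
        by rewrite e ?L1 ?L2 ha ?subrr ?mulr0 ?mul0r ?addr0 ?oppr0.
      apply/rowP => i; rewrite !mxE -gofE (kc x hx _ (ltn_ord i)) hq /pat.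
      by repeat case: ifP => _; ring. } }
  { rewrite (@rank_co1 _ _ _ (\row_(i < n) pat (-a) 0 1 i)) //.
    { have n0 : (1 < n)%N by lia.
      apply/negP => /eqP/rowP/(_ (Ordinal n0)); rewrite !mxE /pat /=.
      by move=> /eqP; rewrite ?oner_eq0 ?eqxx. }
    { apply: vker => //.
      all: rewrite ?(pat_mod _ _ _ m1) ?(pat_mod _ _ _ m2) ?(pat_mod _ _ _ m3) ?(pat_mod _ _ _ m4) /pat /= .
      all: rewrite ?mulr0 ?mulr1 ?ha ?mulrN ?mulNr ?opprK ?oppr0 ?addr0 ?add0r ?subrr ?addNr ?addrN ?ha; try done; ring. }
    { move=> x hx; exists (gof x 1).
      have hp : gof x 0 = 0.
        have [L1 L2] := ke x hx.
  rewrite ?(pat_mod _ _ _ m1) ?(pat_mod _ _ _ m2) ?(pat_mod _ _ _ m3) ?(pat_mod _ _ _ m4) /pat /= in L1 L2.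
        apply: (@cancel2' _ (gof x 0) h2).
        have e : 2 * gof x 0 = a * (- (- a * gof x 0) + a * gof x 0) + 2 * (1 - a * a) * gof x 0 by ring.
        by rewrite e ?L1 ?L2 ha ?subrr ?mulr0 ?mul0r ?addr0 ?oppr0.
      apply/rowP => i; rewrite !mxE -gofE (kc x hx _ (ltn_ord i)) hp /pat.
      by repeat case: ifP => _; ring. } } }
{ have m1 : ((n-4) %% 4 = 3 %% 4)%N by lia.
  have m2 : ((n.-1) %% 4 = 2 %% 4)%N by lia.
  have m3 : ((n-3) %% 4 = 0 %% 4)%N by lia.
  have m4 : ((n.-2) %% 4 = 1 %% 4)%N by lia.
  rewrite rank_full; first by apply: odd_of; lia.
  move=> x hx. have [L1 L2] := ke x hx.
  rewrite ?(pat_mod _ _ _ m1) ?(pat_mod _ _ _ m2) ?(pat_mod _ _ _ m3) ?(pat_mod _ _ _ m4) /pat /= in L1 L2.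
  have e : 2 * a * c * gof x 1 = c * (- gof x 0 + a * gof x 1) - (- (c * gof x 0) + a * (- c * gof x 1)) by ring.
  rewrite L1 L2 ?mulr0 ?addr0 ?subr0 in e.
  have h1 := cancel2 h2 ha hc e.
  have h3 : gof x 0 = 0.
    have e' : gof x 0 = a * gof x 1 - (- gof x 0 + a * gof x 1) by ring.
    by rewrite e' ?L1 ?L2 h1 ?mulr0 ?subr0 ?addr0 ?oppr0.
  by apply/rowP => i; rewrite [RHS]mxE -gofE (kc x hx _ (ltn_ord i)) h1 h3 pat00. }
Qed.

Unset Implicit Arguments.
Set Strict Implicit.
Theorem mainTheorem1 (F : fieldType) (n : nat) (a b c : F) :
  (3 <= n)%N ->
  (a = 1 \/ a = -1) -> (b = 1 \/ b = -1) -> (c = 1 \/ c = -1) ->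
  ~~ odd (\rank (Amx n a b c)) ->
  a = - b.
Proof.
move=> n3 ha hb hc hev.
case: (eqVneq (2:F) 0) => h2.
  have e : (1:F) + 1 = 0 by rewrite -h2; ring.
  have m1 : (1:F) = -1 by apply/eqP; rewrite -addr_eq0 e.
  by case: ha => ->; case: hb => ->; rewrite -?m1 ?opprK.
have hcc : c * c = 1 by case: hc => ->; rewrite ?mulr1 ?mulrNN ?mulr1.
case: ha => ea; case: hb => eb; subst a b; rewrite ?opprK //; exfalso.
  have hc' : c = 1 \/ c = - 1 by [].
  by rewrite (@oddrank F n 1 c h2 n3 (mulr1 1) hcc hc') in hev.
have hc' : c = - 1 \/ c = - - 1 by rewrite opprK; case: hc; [right|left].
by rewrite (@oddrank F n (-1) c h2 n3 ltac:(by rewrite mulrNN mulr1) hcc hc') in hev.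
Qed.
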